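(* Let $\Lambda\colon L\times W\to[0,\infty]$ and $\Lambda'\colon L'\times W'\to[0,\infty]$ be Dowker dissimilarities that are $(\alpha,\alpha')$-interleaved (as Dowker dissimilarities). Then the Rips complexes $R\Lambda$ and $R\Lambda'$ are $(\alpha,\alpha')$-interleaved filtered simplicial complexes.
   Context: A Dowker dissimilarity is a function $\Lambda\colon L\times W\to[0,\infty]$ for sets $L,W$. Its Dowker nerve has level $t\in[0,\infty]$ equal to $N\Lambda_t=\{\text{finite }\sigma\subseteq L\mid \exists w\in W \text{ with }\Lambda(l,w)<t\ \forall l\in\sigma\}$. The Rips complex $R\Lambda$ is the filtered simplicial complex with $(R\Lambda)(t)=\{\text{finite }\sigma\subseteq L\mid \text{every }\tau\subseteq\sigma\text{ with }|\tau|\le2\text{ lies in }N\Lambda_t\}$. Let $\alpha,\alpha'\colon[0,\infty]\to[0,\infty]$ be order preserving with $t\le\alpha(t)$, $t\le\alpha'(t)$. An $(\alpha,\alpha')$-interleaving of Dowker dissimilarities $\Lambda,\Lambda'$ is a pair of relations $C\subseteq L\times L'$, $C'\subseteq L'\times L$ such that: (i) for every $t$ and nonempty $\sigma\in N\Lambda_t$, $C(\sigma)=\{l'\mid\exists l\in\sigma,(l,l')\in C\}$ is finite, nonempty and in $N\Lambda'_{\alpha(t)}$; (ii) symmetrically, for nonempty $\tau\in N\Lambda'_t$, $C'(\tau)$ is finite, nonempty and in $N\Lambda_{\alpha'(t)}$; (iii) $\Delta_L\subseteq C'\circ C$ and $\Delta_{L'}\subseteq C\circ C'$ (composition of relations;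 $\Delta$ the diagonal). Filtered simplicial complexes $K,K'$ are $(\alpha,\alpha')$-interleaved if there are continuous maps $F_t\colon|K(t)|\to|K'(\alpha(t))|$, $G_t\colon|K'(t)|\to|K(\alpha'(t))|$ on geometric realizations, commuting up to homotopy with the inclusions of the filtrations, such that $G_{\alpha(t)}\circ F_t$ is homotopic to the inclusion $|K(t)|\to|K(\alpha'(\alpha(t)))|$ and $F_{\alpha'(t)}\circ G_t$ is homotopic to the inclusion $|K'(t)|\to|K'(\alpha(\alpha'(t)))|$. *)

(* Defs.v *)
From HB Require Import structures.
From mathcomp Require Import all_boot all_order all_algebra.
From mathcomp Require Import all_classical all_reals ereal.
Set Implicit Arguments. Unset Strict Implicit. Unset Printing Implicit Defensive.
Import Order.TTheory GRing.Theory Num.Theory.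
Local Open Scope classical_set_scope.
Local Open Scope ring_scope.

Definition card_le2 {T : Type} (tau : set T) : Prop :=
  forall a b c, tau a -> tau b -> tau c -> a = b \/ a = c \/ b = c.

Definition dowker_nerve {R : realType} {L W : Type} (Lam : L -> W -> \bar R)
  (t : \bar R) : set (set L) :=
  [set sigma | finite_set sigma /\
     exists w : W, forall l, sigma l -> (Lam l w < t)%E].

Definition rips {R : realType} {L W : Type} (Lam : L -> W -> \bar R)
  (t : \bar R) : set (set L) :=
  [set sigma | finite_set sigma /\
     forall tau, tau `<=` sigma -> card_le2 tau -> dowker_nerve Lam t tau].

Definition rel_image {A B : Type} (C : A -> B -> Prop) (sigma : set A) : set B :=
  [set b | exists2 a, sigma a & C a b].

Definition admissible {R : realType} (al : \bar R -> \bar R) : Prop :=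
  (forall s t : \bar R, (0 <= s)%E -> (s <= t)%E -> (al s <= al t)%E) /\
  (forall t : \bar R, (0 <= t)%E -> (t <= al t)%E).

Definition dowker_interleaving {R : realType} {L W L' W' : Type}
  (Lam : L -> W -> \bar R) (Lam' : L' -> W' -> \bar R)
  (al al' : \bar R -> \bar R) (C : L -> L' -> Prop) (C' : L' -> L -> Prop) : Prop :=
  [/\ (forall t, (0 <= t)%E -> forall sigma, dowker_nerve Lam t sigma ->
         sigma !=set0 ->
         [/\ finite_set (rel_image C sigma), rel_image C sigma !=set0 &
             dowker_nerve Lam' (al t) (rel_image C sigma)]),
      (forall t, (0 <= t)%E -> forall tau, dowker_nerve Lam' t tau ->
         tau !=set0 ->
         [/\ finite_set (rel_image C' tau), rel_image C' tau !=set0 &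
             dowker_nerve Lam (al' t) (rel_image C' tau)]),
      (forall l : L, exists l' : L', C l l' /\ C' l' l) &
      (forall l' : L', exists l : L, C' l' l /\ C l l')].

Definition dowker_interleaved {R : realType} {L W L' W' : Type}
  (Lam : L -> W -> \bar R) (Lam' : L' -> W' -> \bar R)
  (al al' : \bar R -> \bar R) : Prop :=
  exists C C', dowker_interleaving Lam Lam' al al' C C'.

(* A point of the geometric realization of a simplicial complex on vertex set
   L is a function x : L -> R (barycentric coordinates).  The closed simplex
   |sigma| of a finite sigma carries the Euclidean topology; |K| carries the
   weak (coherent) topology w.r.t. its closed simplices. *)

Definition simplex_pt {R : realType} {L : choiceType} (sigma : set L)
  (x : L -> R) : Prop :=
  [/\ forall l, 0 <= x l, forall l, ~ sigma l -> x l = 0 &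
      (\sum_(l \in sigma) x l = 1)%R].

Definition real_pt {R : realType} {L : choiceType} (K : set (set L))
  (x : L -> R) : Prop := exists2 sigma, K sigma & simplex_pt sigma x.

Definition simplex_open {R : realType} {L : choiceType} (sigma : set L)
  (U : set (L -> R)) : Prop :=
  forall x, simplex_pt sigma x -> U x ->
    exists2 e : R, 0 < e & forall y, simplex_pt sigma y ->
      (forall l, sigma l -> `|x l - y l| < e) -> U y.

Definition real_open {R : realType} {L : choiceType} (K : set (set L))
  (U : set (L -> R)) : Prop :=
  forall sigma, K sigma -> simplex_open sigma U.

Definition real_cont {R : realType} {L L' : choiceType}
  (K : set (set L)) (K' : set (set L')) (f : (L -> R) -> (L' -> R)) : Prop :=
  (forall x, real_pt K x -> real_pt K' (f x)) /\
  (forall V, real_open K' V -> real_open K (f @^-1` V)).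

(* f and g : |K| -> |K'| are homotopic: there is H : [0,1] x |K| -> |K'|
   continuous for the product topology with H 0 = f and H 1 = g. *)
Definition real_homotopic {R : realType} {L L' : choiceType}
  (K : set (set L)) (K' : set (set L')) (f g : (L -> R) -> (L' -> R)) : Prop :=
  exists H : R -> (L -> R) -> (L' -> R),
  [/\ forall x, real_pt K x -> H 0 x = f x,
      forall x, real_pt K x -> H 1 x = g x,
      forall s x, 0 <= s <= 1 -> real_pt K x -> real_pt K' (H s x) &
      forall V, real_open K' V ->
        forall s x, 0 <= s <= 1 -> real_pt K x -> V (H s x) ->
          exists e : R, exists U : set (L -> R),
            [/\ 0 < e, real_open K U, U x &
                forall s' x', 0 <= s' <= 1 -> `|s - s'| < e ->
                  real_pt K x' -> U x' -> V (H s' x')]].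

(* (alpha, alpha')-interleaving of filtered simplicial complexes indexed by
   t in [0,oo]; the inclusions of geometric realizations are the identity on
   barycentric coordinates. *)
Definition filtered_interleaved {R : realType} {L L' : choiceType}
  (K : \bar R -> set (set L)) (K' : \bar R -> set (set L'))
  (al al' : \bar R -> \bar R) : Prop :=
  exists (F : \bar R -> (L -> R) -> (L' -> R))
         (G : \bar R -> (L' -> R) -> (L -> R)),
  [/\ forall t, (0 <= t)%E -> real_cont (K t) (K' (al t)) (F t),
      forall t, (0 <= t)%E -> real_cont (K' t) (K (al' t)) (G t),
      (forall s t, (0 <= s)%E -> (s <= t)%E ->
        real_homotopic (K s) (K' (al t)) (F t) (F s)) /\
      (forall s t, (0 <= s)%E -> (s <= t)%E ->
        real_homotopic (K' s) (K (al' t)) (G t) (G s)),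
      forall t, (0 <= t)%E ->
        real_homotopic (K t) (K (al' (al t))) (G (al t) \o F t) id &
      forall t, (0 <= t)%E ->
        real_homotopic (K' t) (K' (al (al' t))) (F (al' t) \o G t) id].

(* Main.v *)
Require Import Defs.
From mathcomp Require Import all_boot all_order all_algebra finmap.
From mathcomp Require Import all_classical all_reals ereal topology normedtype.
From mathcomp Require Import ring lra.
Set Implicit Arguments. Unset Strict Implicit. Unset Printing Implicit Defensive.
Import Order.TTheory GRing.Theory Num.Theory.
Import numFieldNormedType.Exports.
Local Open Scope classical_set_scope.
Local Open Scope ring_scope.

Section Simp.
Variable R : realType.

Lemma sp_sumE (L : choiceType) (s : set L) (x : L -> R) : finite_set s ->
  \sum_(l \in s) x l = \sum_(l <- fset_set s) x l.
Proof. by move=> fs; rewrite fsbig_finite. Qed.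

Lemma sp_le1 (L : choiceType) (s : set L) (x : L -> R) : finite_set s ->
  simplex_pt s x -> forall l, x l <= 1.
Proof.
move=> fs [x0 xz xs] l.
have [sl|nsl] := pselect (s l); last by rewrite xz.
rewrite -xs sp_sumE //.
have ls : l \in fset_set s by rewrite in_fset_set // inE.
rewrite (bigD1_seq l) //=.
rewrite lerDl; apply: sumr_ge0 => i _; exact: x0.
Qed.

Lemma sp_ne (L : choiceType) (s : set L) (x : L -> R) :
  simplex_pt s x -> s !=set0.
Proof.
move=> [_ _ xs]; apply/set0P/negP => /eqP s0.
by move: xs; rewrite s0 fsbig_set0 => /eqP; rewrite eq_sym oner_eq0.
Qed.

Lemma sp_widen (L : choiceType) (s t : set L) (x : L -> R) :
  s `<=` t -> simplex_pt s x -> simplex_pt t x.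
Proof.
move=> st [x0 xz xs]; split => //.
  by move=> l tl; apply: xz => /st.
rewrite -xs; apply/esym/fsbig_widen => // l [_ nsl]; exact: xz.
Qed.

Lemma sp_diff1 (L : choiceType) (s : set L) (x y : L -> R) : finite_set s ->
  simplex_pt s x -> simplex_pt s y -> forall l, `|x l - y l| <= 1.
Proof.
move=> fs hx hy l.
have := sp_le1 fs hx l; have := sp_le1 fs hy l.
case: hx => x0 _ _; case: hy => y0 _ _.
have := x0 l; have := y0 l.
move=> a b c d; rewrite ler_norml; apply/andP; split; lra.
Qed.


Definition smap (L L' : choiceType) (phi : L -> L') (x : L -> R) : L' -> R :=
  fun l' => \sum_(l \in [set: L]) (if l' == phi l then x l else 0).

Lemma smapE (L L' : choiceType) (phi : L -> L') s x : finite_set s ->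
  simplex_pt s x -> forall l',
  smap phi x l' = \sum_(l <- fset_set s) (if l' == phi l then x l else 0).
Proof.
move=> fs [_ xz _] l'; rewrite /smap (fsbigTE (fset_set s)) // => i.
rewrite in_fset_set // => /negP nsi; rewrite xz ?if_same //.
by move=> si; apply: nsi; rewrite inE.
Qed.

Lemma smap_pt (L L' : choiceType) (phi : L -> L') s x : finite_set s ->
  simplex_pt s x -> simplex_pt (phi @` s) (smap phi x).
Proof.
move=> fs hx; have [x0 xz xs] := hx; split.
- move=> l'; rewrite (smapE phi fs hx); apply: sumr_ge0 => i _.
  by case: ifP.
- move=> l' nl'; rewrite (smapE phi fs hx); apply: big1_seq => i /andP[_ si].
  case: ifP => // /eqP el; exfalso; apply: nl'; exists i => //.
  by move: si; rewrite in_fset_set // inE.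
- rewrite sp_sumE; last exact: finite_image.
  under eq_bigr do rewrite (smapE phi fs hx).
  rewrite exchange_big /= -xs sp_sumE //; apply: eq_big_seq => i si.
  rewrite -big_mkcond /= -big_filter.
  have -> : [seq l' <- fset_set (phi @` s) | l' == phi i] = [:: phi i].
    apply: filter_pred1_uniq => //.
    rewrite in_fset_set; last exact: finite_image.
    rewrite inE; exists i => //.
    by move: si; rewrite in_fset_set // inE.
  by rewrite big_seq1.
Qed.

Lemma sum_le_const (I : eqType) (r : seq I) (a : I -> R) (d : R) :
  (forall i, i \in r -> a i <= d) -> \sum_(i <- r) a i <= (size r)%:R * d.
Proof.
elim: r => [|h t IH] H; first by rewrite big_nil mul0r.
rewrite big_cons /= -addn1 natrD mulrDl mul1r addrC lerD //.
  by apply: IH => i it; apply: H; rewrite inE it orbT.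
by apply: H; rewrite inE eqxx.
Qed.

Lemma smap_lip (L L' : choiceType) (phi : L -> L') s x y d : finite_set s ->
  simplex_pt s x -> simplex_pt s y -> 0 <= d ->
  (forall l, s l -> `|x l - y l| <= d) ->
  forall l', `|smap phi x l' - smap phi y l'| <= (size (fset_set s))%:R * d.
Proof.
move=> fs hx hy d0 H l'; rewrite (smapE phi fs hx) (smapE phi fs hy) -sumrB.
apply: le_trans (ler_norm_sum _ _ _) _; apply: sum_le_const => i si.
case: ifP => _; last by rewrite subr0 normr0.
by apply: H; move: si; rewrite in_fset_set // inE.
Qed.


Definition Lip (L L' : choiceType) (K : set (set L)) (f : (L -> R) -> (L' -> R)) :=
  forall s, K s -> exists2 M : R, 0 < M & forall d x y, 0 <= d ->
    simplex_pt s x -> simplex_pt s y ->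
    (forall l, s l -> `|x l - y l| <= d) -> forall l', `|f x l' - f y l'| <= M * d.

Definition maps_simp (L L' : choiceType) (K : set (set L)) (K' : set (set L'))
  (f : (L -> R) -> (L' -> R)) :=
  forall s (x0 : L -> R), K s -> simplex_pt s x0 ->
    exists2 s', K' s' & forall x, simplex_pt s x -> simplex_pt s' (f x).

Lemma smap_Lip (L L' : choiceType) (K : set (set L)) (phi : L -> L') :
  (forall s, K s -> finite_set s) -> Lip K (smap phi).
Proof.
move=> fK s Ks; exists ((size (fset_set s))%:R + 1); first by apply: ltr_wpDl.
move=> d x y d0 hx hy H l'; apply: le_trans (smap_lip phi (fK s Ks) hx hy d0 H l') _.
by rewrite ler_wpM2r // lerDl.
Qed.

Lemma Lip_id (L : choiceType) (K : set (set L)) : Lip K id.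
Proof.
move=> s Ks; exists 1 => // d x y d0 [_ xz _] [_ yz _] H l; rewrite mul1r.
have [sl|nsl] := pselect (s l); first exact: H.
by rewrite /= xz // yz // subrr normr0.
Qed.

Lemma Lip_comp (L L' L'' : choiceType) (K : set (set L)) (K' : set (set L'))
  f (g : (L' -> R) -> (L'' -> R)) :
  maps_simp K K' f -> Lip K f -> Lip K' g -> Lip K (g \o f).
Proof.
move=> ms lf lg s Ks.
have [[x0 hx0]|nx] := pselect (exists x0 : L -> R, simplex_pt s x0); last first.
  by exists 1 => // d x y _ hx; exfalso; apply: nx; exists x.
have [s' Ks' Hs'] := ms s x0 Ks hx0.
have [Mf Mf0 HMf] := lf s Ks; have [Mg Mg0 HMg] := lg s' Ks'.
exists (Mg * Mf); first exact: mulr_gt0.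
move=> d x y d0 hx hy H l''; rewrite -mulrA /=.
apply: (HMg (Mf * d) (f x) (f y)).
- exact: mulr_ge0 (ltW Mf0) d0.
- exact: Hs'.
- exact: Hs'.
- by move=> l' _; apply: HMf.
Qed.

Lemma maps_simp_comp (L L' L'' : choiceType) (K : set (set L)) (K' : set (set L'))
  (K'' : set (set L'')) f g :
  maps_simp K K' f -> maps_simp K' K'' g -> maps_simp K K'' (g \o f).
Proof.
move=> mf mg s x0 Ks hx0.
have [s' Ks' Hs'] := mf s x0 Ks hx0.
have [s'' Ks'' Hs''] := mg s' (f x0) Ks' (Hs' _ hx0).
by exists s'' => // x hx; apply: Hs''; apply: Hs'.
Qed.

Lemma good_cont (L L' : choiceType) (K : set (set L)) (K' : set (set L')) f :
  maps_simp K K' f -> Lip K f -> real_cont K K' f.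
Proof.
move=> ms lf; split.
  move=> x [s Ks hx]; have [s' Ks' H] := ms s x Ks hx; exists s' => //; exact: H.
move=> V oV s Ks x hx Vfx.
have [s' Ks' H] := ms s x Ks hx; have [M M0 HM] := lf s Ks.
have [e e0 He] := oV s' Ks' (f x) (H x hx) Vfx.
have e1 : 0 < e / (2 * M) by apply: divr_gt0 => //; apply: mulr_gt0.
exists (e / (2 * M)) => // y hy hxy; rewrite /preimage /=.
apply: He (H y hy) _ => l _.
apply: le_lt_trans (HM (e / (2 * M)) x y (ltW e1) hx hy (fun l sl => ltW (hxy l sl)) l) _.
have -> : M * (e / (2 * M)) = e / 2.
  by field; rewrite gt_eqF.
by rewrite ltr_pdivrMr // ltr_pMr // ltr1n.
Qed.


Definition sline (L L' : choiceType) (f g : (L -> R) -> (L' -> R)) (s : R)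
  (x : L -> R) : L' -> R := fun l => f x l + s * (g x l - f x l).

Lemma sline_pt (L' : choiceType) (t : set L') (a b : L' -> R) s :
  finite_set t -> simplex_pt t a -> simplex_pt t b -> 0 <= s <= 1 ->
  simplex_pt t (fun l => a l + s * (b l - a l)).
Proof.
move=> ft [a0 az as1] [b0 bz bs1] /andP[s0 s1]; split.
- move=> l; have := a0 l; have := b0 l; move=> h1 h2; nra.
- by move=> l nl; rewrite az // bz // subrr mulr0 addr0.
- rewrite sp_sumE // big_split /= -mulr_sumr sumrB -!sp_sumE // as1 bs1.
  by rewrite subrr mulr0 addr0.
Qed.

Lemma tri_bound (A B D s1 s2 a b c : R) :
  `|s2| <= 1 -> `|A| <= a -> `|B| <= b -> `|s2 - s1| <= c -> `|D| <= 1 ->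
  `|A + s2 * (B - A) + (s2 - s1) * D| <= 2 * a + b + c.
Proof.
move=> h2 hA hB hc hD.
have h1 : `|A + s2 * (B - A) + (s2 - s1) * D| <=
   `|A| + `|s2 * (B - A)| + `|(s2 - s1) * D|.
  by apply: le_trans (ler_normD _ _) _; rewrite lerD2r ler_normD.
have h3 : `|s2 * (B - A)| <= `|B| + `|A|.
  rewrite normrM; apply: le_trans (ler_normB _ _).
  by rewrite ler_piMl.
have h4 : `|(s2 - s1) * D| <= c.
  rewrite normrM; apply: le_trans (_ : `|s2 - s1| * 1 <= c); last by rewrite mulr1.
  by rewrite ler_wpM2l.
lra.
Qed.


Lemma sline_homotopic (L L' : choiceType) (K : set (set L)) (K' : set (set L'))
  (f g : (L -> R) -> (L' -> R)) :
  (forall s, K' s -> finite_set s) ->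
  Lip K f -> Lip K g ->
  (forall s (x0 : L -> R), K s -> simplex_pt s x0 -> exists2 t, K' t &
      forall x, simplex_pt s x -> simplex_pt t (f x) /\ simplex_pt t (g x)) ->
  real_homotopic K K' f g.
Proof.
move=> fK' lf lg com.
exists (sline f g); split.
- by move=> x _; apply/funext => l; rewrite /sline mul0r addr0.
- by move=> x _; apply/funext => l; rewrite /sline mul1r addrC subrK.
- move=> s x s01 [σ Kσ hx]; have [t Kt H] := com σ x Kσ hx; exists t => //.
  by have [hf hg] := H x hx; exact: sline_pt (fK' t Kt) hf hg s01.
move=> V oV s x s01 [σ Kσ hx] Vx.
have [t Kt H] := com σ x Kσ hx; have [hf hg] := H x hx.
have ft := fK' t Kt.
have hH : forall s', 0 <= s' <= 1 -> simplex_pt t (sline f g s' x).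
  by move=> s' hs; exact: sline_pt ft hf hg hs.
have [r r0 Hr] := oV t Kt _ (hH s s01) Vx.
pose e := r / 2.
have e0 : 0 < e by rewrite divr_gt0.
exists e, [set x' | forall s', 0 <= s' <= 1 -> `|s - s'| <= e -> V (sline f g s' x')].
split => //; last first.
- by move=> s' x' hs' hss' _ Ux'; apply: Ux' => //; exact: ltW.
- move=> s' hs' hss'; apply: Hr (hH s' hs') _ => l _; rewrite /sline.
  have -> : f x l + s * (g x l - f x l) - (f x l + s' * (g x l - f x l)) =
     (s - s') * (g x l - f x l) by ring.
  rewrite normrM; apply: (@le_lt_trans _ _ e); last by rewrite /e ltr_pdivrMr // ltr_pMr // ltr1n.
  apply: le_trans (_ : `|s - s'| * 1 <= e); last by rewrite mulr1.
  by rewrite ler_wpM2l // (sp_diff1 ft hg hf).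
move=> ρ Kρ x' hx' Ux'.
have [t' Kt' H'] := com ρ x' Kρ hx'.
have ft' := fK' t' Kt'.
have [Mf Mf0 HMf] := lf ρ Kρ; have [Mg Mg0 HMg] := lg ρ Kρ.
pose Fl := filter_from [set d : R | 0 < d]
  (fun d => [set y | simplex_pt ρ y -> forall l, ρ l -> `|x' l - y l| < d]).
have FF : Filter Fl.
  apply: filter_from_filter; first by exists 1%R => /=; exact: ltr01.
  move=> i j i0 j0; exists (Num.min i j); first by rewrite /= lt_min i0 j0.
  move=> y Hy; split => hy l ρl; have := Hy hy l ρl; rewrite lt_min => /andP[]; done.
pose P := fun y s' => simplex_pt ρ y -> 0 <= s' <= 1 -> `|s - s'| <= e -> V (sline f g s' y).
have cov := (compact_near_coveringP _).1 (@segment_compact R 0 1) _ Fl P FF.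
have [d d0 Hd] : Fl [set y | `[(0:R), 1]%classic `<=` P y].
  apply: cov => s' s'01.
  have s'01' : 0 <= s' <= 1 by move: s'01; rewrite /= in_itv.
  have [hss'|hss'] := leP `|s - s'| e.
  + have Vs' := Ux' s' s'01' hss'.
    have [hf' hg'] := H' x' hx'.
    have [r' r'0 Hr'] := oV t' Kt' _ (sline_pt ft' hf' hg' s'01') Vs'.
    pose η := r' / (2 * (2 * Mf + Mg + 1)).
    have η0 : 0 < η by apply: divr_gt0 => //; apply: mulr_gt0 => //; lra.
    exists (ball s' η, [set y | simplex_pt ρ y -> forall l, ρ l -> `|x' l - y l| < η]).
      split; first exact: nbhsx_ballx.
      by exists η.
    case=> s'' y [/= bs'' By] hy hs'' _.
    have [hfy hgy] := H' y hy.
    apply: Hr' (sline_pt ft' hfy hgy hs'') _ => l _.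
    rewrite /sline.
    have hf1 := HMf η x' y (ltW η0) hx' hy (fun l ρl => ltW (By hy l ρl)) l.
    have hg1 := HMg η x' y (ltW η0) hx' hy (fun l ρl => ltW (By hy l ρl)) l.
    rewrite distrC in hf1; rewrite distrC in hg1.
    have -> : f x' l + s' * (g x' l - f x' l) - (f y l + s'' * (g y l - f y l)) =
      - ((f y l - f x' l) + s'' * ((g y l - g x' l) - (f y l - f x' l)) +
         (s'' - s') * (g x' l - f x' l)) by ring.
    rewrite normrN.
    apply: le_lt_trans (tri_bound (c := η) _ hf1 hg1 _ (sp_diff1 ft' hg' hf' l)) _.
    * case/andP: hs'' => h1 h2; rewrite ler_norml; apply/andP; split; lra.
    * by move: bs''; rewrite /ball /= distrC => /ltW.
    * have -> : 2 * (Mf * η) + Mg * η + η = r' / 2.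
        by rewrite /η; field; lra.
      by rewrite ltr_pdivrMr // ltr_pMr // ltr1n.
  + exists (ball s' (`|s - s'| - e), setT).
      split; last exact: filterT.
      by apply: nbhsx_ballx; rewrite subr_gt0.
    case=> s'' y [/= bs'' _] _ _ hle; exfalso.
    move: bs''; rewrite /ball /= => bs''.
    have := ler_distD s'' s s'; rewrite (distrC s'' s'); lra.
exists d => // y hy hxy s' hs' hss'.
apply: (Hd y _ s') => //; last by move=> _ l ρl; apply: hxy.

Qed.

End Simp.

Section Rips.
Variable R : realType.

Lemma nerve_mono (L W : Type) (Lam : L -> W -> \bar R) (t u : \bar R) s :
  (t <= u)%E -> dowker_nerve Lam t s -> dowker_nerve Lam u s.
Proof.
move=> tu [fs [w hw]]; split => //; exists w => l sl.
exact: lt_le_trans (hw l sl) tu.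
Qed.

Lemma nerve_sub (L W : Type) (Lam : L -> W -> \bar R) (t : \bar R) s s' :
  finite_set s' -> s' `<=` s -> dowker_nerve Lam t s -> dowker_nerve Lam t s'.
Proof.
move=> fs' ss [_ [w hw]]; split => //; exists w => l sl; exact: hw (ss _ sl).
Qed.

Lemma rips_mono (L W : Type) (Lam : L -> W -> \bar R) (t u : \bar R) s :
  (t <= u)%E -> rips Lam t s -> rips Lam u s.
Proof.
move=> tu [fs hs]; split => // tau ts c2; exact: nerve_mono tu (hs tau ts c2).
Qed.

Lemma rips_fin (L W : Type) (Lam : L -> W -> \bar R) (t : \bar R) s :
  rips Lam t s -> finite_set s.
Proof. by case. Qed.

End Rips.

Lemma card_le2_pair (T : Type) (a b : T) : card_le2 [set a; b].
Proof.
move=> x y z /= [->|->] [->|->] [->|->];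
  first [by left | by right; left | by right; right].
Qed.

Lemma pair_cover (A B : Type) (σ : set A) (X : set B) (Img : set A -> set B) :
  (forall S T, S `<=` T -> Img S `<=` Img T) ->
  (forall z, X z -> exists2 c, σ c & Img [set c] z) -> σ !=set0 ->
  forall τ, τ `<=` X -> card_le2 τ ->
  exists a b, [/\ σ a, σ b & τ `<=` Img [set a; b]].
Proof.
move=> mono hX [c0 σc0] τ τX c2.
have [[u τu]|τ0] := pselect (τ !=set0); last first.
  by exists c0, c0; split => // z τz; exfalso; apply: τ0; exists z.
have [a σa Ia] := hX u (τX u τu).
have [[v [τv vu]]|nv] := pselect (exists v, τ v /\ v <> u).
  have [b σb Ib] := hX v (τX v τv).
  exists a, b; split => // z τz.
  have [evu|[euz|evz]] := c2 u v z τu τv τz.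
  - by exfalso; apply: vu.
  - by rewrite -euz; apply: mono Ia => w /= ->; left.
  - by rewrite -evz; apply: mono Ib => w /= ->; right.
exists a, a; split => // z τz.
have -> : z = u by apply: contrapT => zu; apply: nv; exists z.
by apply: mono Ia => w /= ->; left.
Qed.

Lemma rel_image_mono (A B : Type) (C : A -> B -> Prop) (S T : set A) :
  S `<=` T -> rel_image C S `<=` rel_image C T.
Proof. by move=> ST b [a Sa Cab]; exists a => //; apply: ST. Qed.

Lemma rips_image (R : realType) (L L' : choiceType) (W W' : Type)
  (Lam : L -> W -> \bar R) (Lam' : L' -> W' -> \bar R) (C : L -> L' -> Prop)
  (phi : L -> L') (t u : \bar R) :
  (forall sigma, dowker_nerve Lam t sigma -> sigma !=set0 ->
     [/\ finite_set (rel_image C sigma), rel_image C sigma !=set0 &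
         dowker_nerve Lam' u (rel_image C sigma)]) ->
  (forall l, C l (phi l)) ->
  forall σ, rips Lam t σ -> σ !=set0 -> rips Lam' u (phi @` σ).
Proof.
move=> hC hphi σ [fσ hσ] ne; split; first exact: finite_image.
move=> τ τs c2.
have [a [b [σa σb τab]]] := pair_cover (@rel_image_mono _ _ C) (X := phi @` σ)
  (fun z '(ex_intro2 c σc ez) => ex_intro2 _ _ c σc
      (ex_intro2 _ _ c (erefl c) (eq_ind _ (fun w => C c w) (hphi c) _ ez))) ne τs c2.
have hab : dowker_nerve Lam t [set a; b].
  apply: hσ; last exact: card_le2_pair.
  by move=> w /= [->|->].
have [fin _ hn] := hC _ hab (ex_intro _ a (or_introl erefl)).
exact: nerve_sub (sub_finite_set τab fin) τab hn.
Qed.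

Lemma rips_comp (R : realType) (L L' : choiceType) (W W' : Type)
  (Lam : L -> W -> \bar R) (Lam' : L' -> W' -> \bar R) (C : L -> L' -> Prop)
  (C' : L' -> L -> Prop) (phi : L -> L') (psi : L' -> L) (t u v : \bar R) :
  (forall sigma, dowker_nerve Lam t sigma -> sigma !=set0 ->
     [/\ finite_set (rel_image C sigma), rel_image C sigma !=set0 &
         dowker_nerve Lam' u (rel_image C sigma)]) ->
  (forall tau, dowker_nerve Lam' u tau -> tau !=set0 ->
     [/\ finite_set (rel_image C' tau), rel_image C' tau !=set0 &
         dowker_nerve Lam v (rel_image C' tau)]) ->
  (forall l, C l (phi l) /\ C' (phi l) l) -> (forall l', C' l' (psi l')) ->
  forall σ, rips Lam t σ -> σ !=set0 -> rips Lam v (σ `|` psi @` (phi @` σ)).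
Proof.
move=> hC hC' hphi hpsi σ [fσ hσ] ne; split.
  by rewrite finite_setU; split => //; do 2 apply: finite_image.
move=> τ τs c2.
have mono : forall S T : set L, S `<=` T ->
    rel_image C' (rel_image C S) `<=` rel_image C' (rel_image C T).
  by move=> S T ST; do 2 apply: rel_image_mono.
have hX : forall z, (σ `|` psi @` (phi @` σ)) z ->
    exists2 c, σ c & rel_image C' (rel_image C [set c]) z.
  move=> z [σz|[_ [c σc <-] <-]].
    exists z => //; exists (phi z); last exact: (hphi z).2.
    by exists z => //; exact: (hphi z).1.
  exists c => //; exists (phi c); last exact: hpsi.
  by exists c => //; exact: (hphi c).1.
have [a [b [σa σb τab]]] := pair_cover mono hX ne τs c2.
have hab : dowker_nerve Lam t [set a; b].
  apply: hσ; last exact: card_le2_pair.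
  by move=> w /= [->|->].
have [fin ne1 hn] := hC _ hab (ex_intro _ a (or_introl erefl)).
have [fin' _ hn'] := hC' _ hn ne1.
exact: nerve_sub (sub_finite_set τab fin') τab hn'.
Qed.

Theorem corollary7p15 (R : realType) (L L' : choiceType) (W W' : Type)
  (Lam : L -> W -> \bar R) (Lam' : L' -> W' -> \bar R)
  (al al' : \bar R -> \bar R) :
  (forall l w, (0 <= Lam l w)%E) ->
  (forall l w, (0 <= Lam' l w)%E) ->
  admissible al -> admissible al' ->
  dowker_interleaved Lam Lam' al al' ->
  filtered_interleaved (rips Lam) (rips Lam') al al'.
Proof.
move=> _ _ [almono alge] [al'mono al'ge] [C [C' [h1 h2 h3 h4]]].
have [phi hphi] := choice h3.
have [psi hpsi] := choice h4.
have al0 : forall t, (0 <= t)%E -> (0 <= al t)%E.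
  by move=> t t0; exact: le_trans t0 (alge t t0).
have al'0 : forall t, (0 <= t)%E -> (0 <= al' t)%E.
  by move=> t t0; exact: le_trans t0 (al'ge t t0).
have msF : forall (s u : \bar R), (0 <= s)%E -> (al s <= u)%E ->
    maps_simp (rips Lam s) (rips Lam' u) (smap (R:=R) phi).
  move=> s u s0 su σ x0 Kσ hx0; exists (phi @` σ).
    apply: rips_mono su _; apply: (rips_image (h1 s s0)) => //.
      by move=> l; exact: (hphi l).1.
    exact: sp_ne hx0.
  by move=> x hx; apply: smap_pt => //; exact: rips_fin Kσ.
have msG : forall (s u : \bar R), (0 <= s)%E -> (al' s <= u)%E ->
    maps_simp (rips Lam' s) (rips Lam u) (smap (R:=R) psi).
  move=> s u s0 su σ x0 Kσ hx0; exists (psi @` σ).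
    apply: rips_mono su _; apply: (rips_image (h2 s s0)) => //.
      by move=> l; exact: (hpsi l).1.
    exact: sp_ne hx0.
  by move=> x hx; apply: smap_pt => //; exact: rips_fin Kσ.
have LF : forall s, Lip (rips Lam s) (smap (R:=R) phi).
  by move=> s; apply: smap_Lip => σ; exact: rips_fin.
have LG : forall s, Lip (rips Lam' s) (smap (R:=R) psi).
  by move=> s; apply: smap_Lip => σ; exact: rips_fin.
exists (fun _ => smap phi), (fun _ => smap psi); split.
- by move=> t t0; apply: good_cont (msF t _ t0 (lexx _)) (LF t).
- by move=> t t0; apply: good_cont (msG t _ t0 (lexx _)) (LG t).
- split.
  + move=> s t s0 st; apply: sline_homotopic.
    * by move=> σ; exact: rips_fin.
    * exact: LF.
    * exact: LF.
    * move=> σ x0 Kσ hx0.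
      have [σ' Kσ' H] := msF s (al t) s0 (almono s t s0 st) σ x0 Kσ hx0.
      by exists σ' => // x hx; split; apply: H.
  + move=> s t s0 st; apply: sline_homotopic.
    * by move=> σ; exact: rips_fin.
    * exact: LG.
    * exact: LG.
    * move=> σ x0 Kσ hx0.
      have [σ' Kσ' H] := msG s (al' t) s0 (al'mono s t s0 st) σ x0 Kσ hx0.
      by exists σ' => // x hx; split; apply: H.
- move=> t t0; apply: sline_homotopic.
  + by move=> σ; exact: rips_fin.
  + exact: Lip_comp (msF t _ t0 (lexx _)) (LF t) (LG _).
  + exact: Lip_id.
  + move=> σ x0 Kσ hx0.
    have fσ := rips_fin Kσ.
    exists (σ `|` psi @` (phi @` σ)).
      apply: (rips_comp (h1 t t0) (h2 _ (al0 t t0))) => //.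
        by move=> l; exact: (hpsi l).1.
      exact: sp_ne hx0.
    move=> x hx; split; last by apply: sp_widen hx => w; left.
    apply: sp_widen (smap_pt psi (finite_image _ fσ) (smap_pt phi fσ hx)).
    by move=> w; right.
- move=> t t0; apply: sline_homotopic.
  + by move=> σ; exact: rips_fin.
  + exact: Lip_comp (msG t _ t0 (lexx _)) (LG t) (LF _).
  + exact: Lip_id.
  + move=> σ x0 Kσ hx0.
    have fσ := rips_fin Kσ.
    exists (σ `|` phi @` (psi @` σ)).
      apply: (rips_comp (h2 t t0) (h1 _ (al'0 t t0))) => //.
        by move=> l; exact: (hphi l).1.
      exact: sp_ne hx0.
    move=> x hx; split; last by apply: sp_widen hx => w; left.
    apply: sp_widen (smap_pt phi (finite_image _ fσ) (smap_pt psi fσ hx)).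
    by move=> w; right.
Qed.
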